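(* Let $(C,0)\subset\mathbb{A}^n$ be a homogeneous reduced curve singularity (the cone over a finite set of points in $\mathbb{P}^{n-1}$, all coordinates of weight $1$), with graded coordinate ring $\mathcal{O}$ and graded total ring of fractions $K$. For every integer $\ell$, if $K_{\ell+1}=\mathcal{O}_{\ell+1}$ then $T^1_\ell=0$. In particular, if $C=L_r^n$ is the cone over $r$ points of $\mathbb{P}^{n-1}$ in general position and $d$ is the integer with $\binom{n+d-2}{d-1}<r\le\binom{n+d-1}{d}$, then $T^1_\ell=0$ for all $\ell\ge d-1$.
   Context: The ground field $\k$ is algebraically closed of characteristic $0$. For a cone $C$ over $r$ points, $K\cong\prod_{i=1}^r\k[t_i,t_i^{-1}]$ graded by $\deg t_i=1$, and $\mathcal{O}=\k[x_1,\dots,x_n]/I\subset K$ with $I$ homogeneous. $T^1=T^1(C,0)=\operatorname{Coker}\big(\Theta_n\otimes\mathcal{O}\to\operatorname{Hom}_{\mathcal{O}_n}(I,\mathcal{O})\big)$, where $\Theta_n\otimes\mathcal{O}$ is the free module on $\partial/\partial x_i$; it is graded, $T^1_\ell$ being the image of homomorphisms sending each homogeneous generator of $I$ of degree $q$ to an element of degree $q+\ell$ (so $\ell<0$ corresponds to deformations of negative weight). A point set in $\mathbb{P}^{n-1}$ of $r$ points is in general position if for every $\ell\ge1$ it imposes $\min(r,\binom{n+\ell-1}{\ell})$ independent conditions on forms of degree $\ell$. *)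

(* Defs.v *)
From HB Require Import structures.
From mathcomp Require Import all_boot all_order all_algebra.
From mathcomp Require Import mpoly.

Set Implicit Arguments.
Unset Strict Implicit.
Unset Printing Implicit Defensive.

Import Order.TTheory GRing.Theory Num.Theory.
Local Open Scope ring_scope.

Section Cone.
Variables (k : fieldType) (n r : nat).

(* A polynomial that is homogeneous of integer degree e: for e < 0 this
   means the zero polynomial (the graded piece of negative degree is 0). *)
Definition homog_int (e : int) (f : {mpoly k[n]}) : Prop :=
  match e with
  | Posz m => f \is m.-homog
  | Negz _ => f = 0
  end.

(* The points p_1, ..., p_r of P^{n-1}, given by representative vectors:
   nonzero and pairwise non-proportional (i.e. distinct projective points). *)
Definition distinct_proj_points (p : 'I_r -> 'I_n -> k) : Prop :=
  (forall i, exists t, p i t != 0) /\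
  (forall i j, i != j -> ~ exists c : k, forall t, p i t = c * p j t).

(* The ideal I of the cone C over the points: polynomials vanishing on
   every line c * p_i. *)
Definition inI (p : 'I_r -> 'I_n -> k) (f : {mpoly k[n]}) : Prop :=
  forall (c : k) (i : 'I_r), f.@[fun t => c * p i t] = 0.

(* Graded pieces, via the embedding O -> K = prod_i k[t_i, t_i^-1],
   x_j |-> (p_i j * t_i)_i.  An element of K_e is (c_i t_i^e)_i, identified
   with c : 'I_r -> k; a homogeneous f of degree e maps to (f(p_i) t_i^e)_i. *)
Definition O_piece (p : 'I_r -> 'I_n -> k) (e : int) (c : 'I_r -> k) : Prop :=
  exists f : {mpoly k[n]}, homog_int e f /\ forall i, c i = f.@[p i].

Definition K_piece_eq_O_piece (p : 'I_r -> 'I_n -> k) (e : int) : Prop :=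
  forall c : 'I_r -> k, O_piece p e c.

(* An O_n-module homomorphism I -> O = k[x]/I of degree l, represented by a
   choice of lifts phi : k[x] -> k[x] (only its values on I matter). *)
Definition hom_deg (p : 'I_r -> 'I_n -> k) (l : int)
    (phi : {mpoly k[n]} -> {mpoly k[n]}) : Prop :=
  [/\ (forall f g, inI p f -> inI p g -> inI p (phi (f + g) - (phi f + phi g))),
      (forall h f, inI p f -> inI p (phi (h * f) - h * phi f)) &
      (forall (q : nat) f, inI p f -> f \is q.-homog ->
         exists g, homog_int (q%:Z + l) g /\ inI p (phi f - g))].

(* T^1_l = 0 : every degree-l homomorphism I -> O is induced by a derivation
   sum_j a_j d/dx_j with a_j in O_{l+1}. *)
Definition T1_vanishes (p : 'I_r -> 'I_n -> k) (l : int) : Prop :=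
  forall phi, hom_deg p l phi ->
    exists a : 'I_n -> {mpoly k[n]},
      (forall j, homog_int (l + 1) (a j)) /\
      (forall f, inI p f ->
         inI p (phi f - \sum_(j < n) a j * f^`M(j))).

(* Number of independent conditions imposed by the points on forms of degree
   l = rank of the evaluation matrix (rows: monomials of degree l, padded by
   zero rows for the other monomials of degree < l+1; columns: points). *)
Definition eval_mx (p : 'I_r -> 'I_n -> k) (l : nat) :
    'M[k]_(#|{: 'X_{1..n < l.+1}}|, r) :=
  \matrix_(a, i)
    (let m := (enum_val a : 'X_{1..n < l.+1}) in
     if mdeg m == l then ('X_[m : 'X_{1..n}] : {mpoly k[n]}).@[p i] else 0).

Definition general_position (p : 'I_r -> 'I_n -> k) : Prop :=
  forall l : nat, (1 <= l)%N ->
    \rank (eval_mx p l) = minn r 'C(n + l - 1, l).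

End Cone.

(* Main.v *)
Require Import Defs.
From HB Require Import structures.
From mathcomp Require Import all_boot all_order all_algebra.
From mathcomp Require Import mpoly.
Import Order.TTheory GRing.Theory Num.Theory.
Set Implicit Arguments.
Unset Strict Implicit.
Unset Printing Implicit Defensive.
Local Open Scope ring_scope.

Section Basic.
Variables (k : fieldType) (n : nat).
Implicit Types (f g : {mpoly k[n]}).

Lemma meval_homog f (q : nat) (c : k) (x : 'I_n -> k) :
  f \is q.-homog -> f.@[fun t => c * x t] = c ^+ q * f.@[x].
Proof.
move=> Hf; rewrite !mevalE mulr_sumr; apply: eq_big_seq => m Hm.
rewrite mulrCA; congr (_ * _).
rewrite (eq_bigr (fun i => c ^+ m i * x i ^+ m i)); last by move=> i _; rewrite exprMn.
by rewrite big_split /= prodrXr -mdegE (dhomog_mf Hf Hm).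
Qed.

Lemma homog0_const f : f \is 0.-homog -> f = (f@_0%MM)%:MP.
Proof.
move=> Hf; apply/mpolyP => m; rewrite mcoeffC.
have [->|Hm] := eqVneq m 0%MM; first by rewrite mulr1.
rewrite mulr0; apply: (dhomog_nemf_coeff Hf).
by rewrite mdeg_eq0.
Qed.

Lemma mderiv_homog f (q : nat) (j : 'I_n) :
  f \is q.+1.-homog -> f^`M(j) \is q.-homog.
Proof.
move=> Hf; apply/dhomogP => m; rewrite mcoeff_msupp mcoeff_deriv => Hm.
have Hm' : f@_(m + U_(j)) != 0.
  by apply: contraNneq Hm => ->; rewrite mul0rn.
rewrite -mcoeff_msupp in Hm'.
have := dhomog_mf Hf Hm' => /= H; move: H; rewrite mdegD mdeg1 addn1.
by case.
Qed.

Lemma mderiv_sum (j : 'I_n) (m : nat) (F : 'I_m -> {mpoly k[n]}) :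
  (\sum_(s < m) F s)^`M(j) = \sum_(s < m) (F s)^`M(j).
Proof. by apply: (big_morph (mderiv j)); [apply: mderivD | apply: mderiv0]. Qed.

Lemma meval_sum (x : 'I_n -> k) (m : nat) (F : 'I_m -> {mpoly k[n]}) :
  (\sum_(s < m) F s).@[x] = \sum_(s < m) (F s).@[x].
Proof. by apply: (big_morph (meval x)); [apply: mevalD | apply: meval0]. Qed.

Lemma meval_sumT (x : 'I_n -> k) (I : Type) (s : seq I) (P : pred I) (F : I -> {mpoly k[n]}) :
  (\sum_(y <- s | P y) F y).@[x] = \sum_(y <- s | P y) (F y).@[x].
Proof. by apply: (big_morph (meval x)); [apply: mevalD | apply: meval0]. Qed.

Lemma euler_mon (m : 'X_{1..n}) :
  \sum_(j < n) 'X_j * ('X_[m] : {mpoly k[n]})^`M(j) = (mdeg m)%:R *: 'X_[m].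
Proof.
rewrite mdegE natr_sum scaler_suml; apply: eq_bigr => j _.
rewrite mderivX -scalerAr.
case: (posnP (m j)) => [->|Hj]; first by rewrite !scale0r.
congr (_ *: _); rewrite -mpolyXD; congr ('X_[_]).
apply/mnmP => i; rewrite mnmDE mnmBE mnm1E.
case: eqP => [<-|_]; last by rewrite subn0.
by rewrite addnC subnK.
Qed.

Lemma euler f (q : nat) : f \is q.-homog ->
  \sum_(j < n) 'X_j * f^`M(j) = q%:R *: f.
Proof.
move=> Hf; rewrite [in LHS](mpolyE f) [in RHS](mpolyE f).
under eq_bigr => j _ do rewrite raddf_sum mulr_sumr.
rewrite exchange_big /= scaler_sumr; apply: eq_big_seq => m Hm.
under eq_bigr => j _ do rewrite mderivZ -scalerAr.
by rewrite -scaler_sumr euler_mon (dhomog_mf Hf Hm) scalerA mulrC -scalerA.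
Qed.

End Basic.

Section Ideal.
Variables (k : fieldType) (n r : nat) (p : 'I_r -> 'I_n -> k).
Implicit Types (f g h : {mpoly k[n]}).

Lemma inI_eval f i : inI p f -> f.@[p i] = 0.
Proof.
move=> /(_ 1 i); rewrite (@meval_eq _ _ _ (p i)) //.
by move=> t; rewrite mul1r.
Qed.

Lemma inI0 : inI p 0.
Proof. by move=> c i; rewrite meval0. Qed.

Lemma inID f g : inI p f -> inI p g -> inI p (f + g).
Proof. by move=> Hf Hg c i; rewrite mevalD Hf Hg addr0. Qed.

Lemma inIN f : inI p f -> inI p (- f).
Proof. by move=> Hf c i; rewrite mevalN Hf oppr0. Qed.

Lemma inIB f g : inI p f -> inI p g -> inI p (f - g).
Proof. by move=> Hf Hg; apply: inID => //; apply: inIN. Qed.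

Lemma inIM h f : inI p f -> inI p (h * f).
Proof. by move=> Hf c i; rewrite mevalM Hf mulr0. Qed.

Lemma inIZ (a : k) f : inI p f -> inI p (a *: f).
Proof. by move=> Hf; rewrite -mul_mpolyC; apply: inIM. Qed.

Lemma inI_sum (I : Type) (s : seq I) (F : I -> {mpoly k[n]}) :
  (forall x, inI p (F x)) -> inI p (\sum_(x <- s) F x).
Proof.
move=> H; elim: s => [|x s IH]; first by rewrite big_nil; apply: inI0.
by rewrite big_cons; apply: inID.
Qed.

Lemma inI_sum_ord (m : nat) (F : 'I_m -> {mpoly k[n]}) :
  (forall x, inI p (F x)) -> inI p (\sum_(x < m) F x).
Proof. by move=> H; apply: inI_sum. Qed.

Lemma inI_eq f g : inI p (f - g) -> forall i, f.@[p i] = g.@[p i].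
Proof.
by move=> H i; apply/eqP; rewrite -subr_eq0 -mevalB inI_eval.
Qed.

Variables (l : int) (phi : {mpoly k[n]} -> {mpoly k[n]}).
Hypothesis Hphi : hom_deg p l phi.

Lemma phi_add f g : inI p f -> inI p g -> inI p (phi (f + g) - (phi f + phi g)).
Proof. by case: Hphi => H _ _; apply: H. Qed.

Lemma phi_mul h f : inI p f -> inI p (phi (h * f) - h * phi f).
Proof. by case: Hphi => _ H _; apply: H. Qed.

Lemma phi_0 : inI p (phi 0).
Proof.
have := phi_add inI0 inI0; rewrite addr0 opprD addrA subrr add0r.
by move/inIN; rewrite opprK.
Qed.

Definition E i f := (phi f).@[p i].

Lemma E_add i f g : inI p f -> inI p g -> E i (f + g) = E i f + E i g.
Proof. by move=> Hf Hg; rewrite /E -mevalD; apply: inI_eq; apply: phi_add. Qed.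

Lemma E_mul i h f : inI p f -> E i (h * f) = h.@[p i] * E i f.
Proof. by move=> Hf; rewrite /E -mevalM; apply: inI_eq; apply: phi_mul. Qed.

Lemma E_0 i : E i 0 = 0.
Proof. by rewrite /E inI_eval //; apply: phi_0. Qed.

Lemma E_scale i (a : k) f : inI p f -> E i (a *: f) = a * E i f.
Proof. by move=> Hf; rewrite -mul_mpolyC E_mul // mevalC. Qed.

Lemma E_sum i (m : nat) (F : 'I_m -> {mpoly k[n]}) :
  (forall x, inI p (F x)) -> E i (\sum_(x < m) F x) = \sum_(x < m) E i (F x).
Proof.
move=> H; rewrite /index_enum; elim: (Finite.enum _) => [|x s IH].
  by rewrite !big_nil E_0.
rewrite !big_cons E_add ?IH //; exact: inI_sum.
Qed.

End Ideal.
From mathcomp Require Import ring.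

Section Line.
Variables (k : fieldType) (n r : nat) (p : 'I_r -> 'I_n -> k).
Hypothesis Hchar : [pchar k] =i pred0.
Variables (l : int) (phi : {mpoly k[n]} -> {mpoly k[n]}).
Hypothesis Hphi : hom_deg p l phi.
Variables (i : 'I_r) (t : 'I_n) (e : nat) (h : {mpoly k[n]}).
Hypothesis Ht : p i t != 0.
Hypothesis Hh : h \is e.-homog.
Hypothesis Hhj : forall j, j != i -> h.@[p j] = 0.
Hypothesis Hhi : h.@[p i] != 0.

Local Notation a := (p i).

Lemma euler_eval (g : {mpoly k[n]}) (q : nat) (x : 'I_n -> k) : g \is q.-homog ->
  \sum_(s < n) x s * (g^`M(s)).@[x] = q%:R * g.@[x].
Proof.
move=> Hg; have := congr1 (meval x) (euler Hg).
rewrite raddf_sum mevalZ /= => <-; apply: eq_bigr => s _.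
by rewrite mevalM mevalXU.
Qed.

Lemma hvanish (f : {mpoly k[n]}) (q : nat) : f \is q.-homog -> f.@[a] = 0 ->
  inI p (h * f).
Proof.
move=> Hf Hfa c j; rewrite mevalM.
have [->|Hji] := eqVneq j i; first by rewrite (meval_homog _ _ Hf) Hfa !mulr0.
by rewrite (meval_homog _ _ Hh) Hhj // mulr0 mul0r.
Qed.

Definition lam (j : 'I_n) : {mpoly k[n]} := a t *: 'X_j - a j *: 'X_t.

Lemma lam_homog j : lam j \is 1.-homog.
Proof. by rewrite rpredB // rpredZ // dhomogX /= mdeg1. Qed.

Lemma lam_eval j : (lam j).@[a] = 0.
Proof. by rewrite /lam mevalB !mevalZ !mevalXU mulrC subrr. Qed.

Lemma hlam_inI j : inI p (h * lam j).
Proof. exact: hvanish (lam_homog j) (lam_eval j). Qed.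

Definition V (j : 'I_n) := E p phi i (h * lam j) / a t.

Definition Dd (f : {mpoly k[n]}) := \sum_(j < n) a j *: f^`M(j).

Lemma key_identity (f : {mpoly k[n]}) (q : nat) : f \is q.+1.-homog ->
  (a t * q.+1%:R) *: f = \sum_(j < n) f^`M(j) * lam j + 'X_t * Dd f.
Proof.
move=> Hf; rewrite -scalerA -(euler Hf) scaler_sumr /Dd mulr_sumr -big_split /=.
apply: eq_bigr => j _; rewrite /lam -!mul_mpolyC; ring.
Qed.

Lemma line_key (q : nat) (f : {mpoly k[n]}) : f \is q.-homog -> f.@[a] = 0 ->
  E p phi i (h * f) = \sum_(j < n) (f^`M(j)).@[a] * V j.
Proof.
elim: q f => [|q IH] f Hf Hfa.
  move: Hfa; rewrite (homog0_const Hf) mevalC => ->.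
  rewrite mulr0 (E_0 Hphi) big1 // => j _; by rewrite mderivC meval0 mul0r.
have Hq : (a t * q.+1%:R) != 0.
  by rewrite mulf_neq0 // ((pcharf0P k).1 Hchar).
apply: (mulfI Hq).
rewrite -(E_scale Hphi); last exact: hvanish Hf Hfa.
rewrite scalerAr key_identity // mulrDr mulr_sumr.
have HDh : Dd f \is q.-homog.
  by apply: rpred_sum => j _; apply: rpredZ; apply: mderiv_homog.
have HDa : (Dd f).@[a] = 0.
  rewrite /Dd raddf_sum /=.
  under eq_bigr => j _ do rewrite mevalZ.
  by rewrite (euler_eval _ Hf) Hfa mulr0.
have HDI : inI p (h * Dd f) := hvanish HDh HDa.
rewrite (E_add Hphi); last first.
- by rewrite mulrCA; apply: inIM.
- by apply: inI_sum => j; rewrite mulrCA; apply: inIM; apply: hlam_inI.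
rewrite (E_sum Hphi); last by move=> j; rewrite mulrCA; apply: inIM; apply: hlam_inI.
rewrite mulrCA (E_mul Hphi) // mevalXU IH //.
under eq_bigr => j _ do rewrite mulrCA (E_mul Hphi _ _ (hlam_inI j)).
have HD' : forall j, ((Dd f)^`M(j)).@[a] = q%:R * (f^`M(j)).@[a].
  move=> j; rewrite /Dd mderiv_sum raddf_sum /=.
  under eq_bigr => s _ do rewrite mderivZ mevalZ mderiv_comm.
  by apply: euler_eval; apply: mderiv_homog.
have -> : \sum_(j < n) ((Dd f)^`M(j)).@[a] * V j =
    \sum_(j < n) q%:R * (f^`M(j)).@[a] * V j.
  by apply: eq_bigr => j _; rewrite HD'.
rewrite mulr_sumr mulr_sumr -big_split /=; apply: eq_bigr => j _.
by rewrite /V -addn1 natrD; field.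
Qed.

Lemma line_E (q : nat) (f : {mpoly k[n]}) : inI p f -> f \is q.-homog ->
  E p phi i f = \sum_(j < n) (f^`M(j)).@[a] * (V j / h.@[a]).
Proof.
move=> HI Hf; apply: (mulfI Hhi); rewrite -(E_mul Hphi _ _ HI).
rewrite (line_key Hf (@inI_eval _ _ _ _ f i HI)) mulr_sumr; apply: eq_bigr => j _.
by field.
Qed.

End Line.
Section Construct.
Variables (k : fieldType) (n r : nat) (p : 'I_r -> 'I_n -> k).
Hypothesis Hchar : [pchar k] =i pred0.
Hypothesis Hd : distinct_proj_points p.

Lemma sep_form (i j : 'I_r) : j != i -> exists mu : {mpoly k[n]},
  [/\ mu \is 1.-homog, mu.@[p j] = 0 & mu.@[p i] != 0].
Proof.
move=> Hji; case: Hd => H1 H2; have [t Ht] := H1 j.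
case: (boolP [exists s, p j t * p i s - p j s * p i t != 0]).
  move/existsP => [s Hs]; exists (p j t *: 'X_s - p j s *: 'X_t); split.
  - by rewrite rpredB // rpredZ // dhomogX /= mdeg1.
  - by rewrite mevalB !mevalZ !mevalXU mulrC subrr.
  - by rewrite mevalB !mevalZ !mevalXU.
move/existsPn => Hall; exfalso; apply: (H2 i j); first by rewrite eq_sym.
exists (p i t / p j t) => s; have := Hall s; rewrite negbK subr_eq0 => /eqP Hs.
by apply: (mulfI Ht); rewrite Hs; field.
Qed.

Lemma exists_h_seq (i : 'I_r) (s : seq 'I_r) : i \notin s ->
  exists e (h : {mpoly k[n]}), [/\ h \is e.-homog,
    (forall j, j \in s -> h.@[p j] = 0) & h.@[p i] != 0].
Proof.
elim: s => [|j s IH] Hs.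
  by exists 0%N, 1; split; rewrite ?dhomog1 // meval1 oner_eq0.
rewrite inE negb_or eq_sym in Hs; case/andP: Hs => Hji Hs.
have [e [h [Hh Hhs Hhi]]] := IH Hs.
have [mu [Hmu Hmuj Hmui]] := sep_form Hji.
exists (1 + e)%N, (mu * h); split.
- exact: dhomogM.
- by move=> j'; rewrite inE => /orP [/eqP ->|Hj']; rewrite mevalM ?Hmuj ?mul0r ?Hhs ?mulr0.
- by rewrite mevalM mulf_neq0.
Qed.

Lemma exists_h (i : 'I_r) : exists e (h : {mpoly k[n]}), [/\ h \is e.-homog,
    (forall j, j != i -> h.@[p j] = 0) & h.@[p i] != 0].
Proof.
have [|e [h [Hh Hhs Hhi]]] := @exists_h_seq i [seq j <- enum 'I_r | j != i].
  by rewrite mem_filter eqxx.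
by exists e, h; split => // j Hj; apply: Hhs; rewrite mem_filter Hj mem_enum.
Qed.

Variables (l : int) (phi : {mpoly k[n]} -> {mpoly k[n]}).
Hypothesis Hphi : hom_deg p l phi.

Lemma line_v (i : 'I_r) : exists v : 'I_n -> k, forall (q : nat) f,
  inI p f -> f \is q.-homog ->
  E p phi i f = \sum_(j < n) (f^`M(j)).@[p i] * v j.
Proof.
case: Hd => H1 _; have [t Ht] := H1 i.
have [e [h [Hh Hhj Hhi]]] := exists_h i.
exists (fun j => V p phi i t h j / h.@[p i]) => q f HI Hf.
exact: (line_E Hchar Hphi Ht Hh Hhj Hhi HI Hf).
Qed.

Lemma natr_inj : injective (fun x : nat => x%:R : k).
Proof.
have H : forall x y : nat, (x <= y)%N -> x%:R = y%:R :> k -> x = y.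
  move=> x y Hxy Heq; apply/eqP; rewrite eqn_leq Hxy /= -subn_eq0.
  by rewrite -((pcharf0P k).1 Hchar) natrB // Heq subrr.
move=> x y /= Heq; case: (leqP x y) => Hxy; first exact: H.
by apply/esym/H; [exact: ltnW|].
Qed.

Lemma inI_pihomog (f : {mpoly k[n]}) (d : nat) :
  inI p f -> inI p (pihomog mdeg d f).
Proof.
move=> Hf c i.
pose N := maxn (msize f) d.+1.
have HN : (msize f <= N)%N by rewrite leq_maxl.
have HdN : (d < N)%N by rewrite leq_maxr.
pose P : {poly k} := \poly_(e < N) (pihomog mdeg e f).@[p i].
have HP : forall x, P.[x] = 0.
  move=> x; rewrite horner_poly -[RHS](Hf x i) [in RHS](pihomog_partitionE HN) raddf_sum /=.
  apply: eq_bigr => e _; rewrite (meval_homog _ _ (pihomogP _ _ _)).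
  by rewrite mulrC.
have P0 : P = 0.
  apply/eqP; apply: contraT => HP0.
  have := max_poly_roots HP0 (rs := [seq x%:R | x <- iota 0 (size P)]).
  rewrite size_map size_iota ltnn; apply.
  - by apply/allP => x _; apply/rootP; apply: HP.
  - by rewrite map_inj_uniq ?iota_uniq //; apply: natr_inj.
have : P`_d = 0 by rewrite P0 coef0.
rewrite coef_poly HdN => H0.
by rewrite (meval_homog _ _ (pihomogP _ _ _)) H0 mulr0.
Qed.

End Construct.
From Stdlib Require Import ClassicalEpsilon.
From mathcomp Require Import zify.

Section Main1.
Variables (k : fieldType) (n r : nat) (p : 'I_r -> 'I_n -> k).
Hypothesis Hchar : [pchar k] =i pred0.
Hypothesis Hr : (0 < r)%N.
Hypothesis Hd : distinct_proj_points p.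

Lemma phi_sum (l : int) phi (Hphi : hom_deg p l phi) (I : Type) (s : seq I)
    (F : I -> {mpoly k[n]}) : (forall x, inI p (F x)) ->
  inI p (phi (\sum_(x <- s) F x) - \sum_(x <- s) phi (F x)).
Proof.
move=> HF; elim: s => [|x s IH].
  by rewrite !big_nil subr0; apply: (phi_0 Hphi).
rewrite !big_cons.
have H1 := phi_add Hphi (HF x) (@inI_sum k n r p I s F HF).
set S := \sum_(y <- s) F y in H1 IH *; set T := \sum_(y <- s) phi (F y) in IH *.
have -> : phi (F x + S) - (phi (F x) + T) =
  (phi (F x + S) - (phi (F x) + phi S)) + (phi S - T) by ring.
exact: inID.
Qed.

Lemma sum_case (l : int) phi (Hphi : hom_deg p l phi) (A : 'I_n -> {mpoly k[n]})
    (N : nat) (F : 'I_N -> {mpoly k[n]}) :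
  (forall d, inI p (F d)) ->
  (forall d, inI p (phi (F d) - \sum_(j < n) A j * (F d)^`M(j))) ->
  inI p (phi (\sum_(d < N) F d) - \sum_(j < n) A j * (\sum_(d < N) F d)^`M(j)).
Proof.
move=> HF HF2.
have H1 := @phi_sum l phi Hphi _ (index_enum 'I_N) F HF.
have H2 := @inI_sum k n r p _ (index_enum 'I_N) _ HF2.
have -> : phi (\sum_(d < N) F d) - \sum_(j < n) A j * (\sum_(d < N) F d)^`M(j) =
  (phi (\sum_(d < N) F d) - \sum_(d < N) phi (F d)) +
  \sum_(d < N) (phi (F d) - \sum_(j < n) A j * (F d)^`M(j)).
  rewrite sumrB addrA subrK; congr (_ - _).
  under eq_bigr => j _ do rewrite mderiv_sum mulr_sumr.
  by rewrite exchange_big.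
exact: inID.
Qed.

Lemma part1 (l : int) : K_piece_eq_O_piece p (l + 1) -> T1_vanishes p l.
Proof.
move=> HK phi Hphi.
pose i0 : 'I_r := Ordinal Hr.
have [m Hm] : exists m : nat, l + 1 = m%:Z.
  case El : (l + 1) => [m|m]; first by exists m.
  have [f [Hf Hc]] := HK (fun _ => 1).
  rewrite El /= in Hf.
  by move: (Hc i0); rewrite Hf meval0 => /eqP; rewrite oner_eq0.
have Hv : forall i, {v : 'I_n -> k | forall (q : nat) f, inI p f -> f \is q.-homog ->
    E p phi i f = \sum_(j < n) (f^`M(j)).@[p i] * v j}.
  by move=> i; apply: constructive_indefinite_description; exact: (line_v Hchar Hd Hphi i).
pose V i := sval (Hv i).
have HVl : forall i (q : nat) f, inI p f -> f \is q.-homog ->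
    E p phi i f = \sum_(j < n) (f^`M(j)).@[p i] * V i j.
  by move=> i; exact: (svalP (Hv i)).
have HA : forall j, {a : {mpoly k[n]} | homog_int (l + 1) a /\
    forall i, V i j = a.@[p i]}.
  by move=> j; apply: constructive_indefinite_description; exact: HK.
pose A j := sval (HA j).
exists A; split; first by move=> j; case: (svalP (HA j)).
have HAm : forall j, A j \is m.-homog.
  by move=> j; rewrite /A; case: (HA j) => a [H _] /=; move: H; rewrite Hm.
have HAv : forall i j, (A j).@[p i] = V i j.
  by move=> i j; rewrite /A; case: (HA j) => a [_ H] /=; rewrite H.
have hc : forall (q : nat) g, inI p g -> g \is q.-homog ->
    inI p (phi g - \sum_(j < n) A j * g^`M(j)).
  move=> [|q] g Hg Hgq.
    have Hc := homog0_const Hgq.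
    have H0 : g@_0%MM = 0.
      by have := @inI_eval _ _ _ _ g i0 Hg; rewrite {1}Hc mevalC.
    have -> : g = 0 by rewrite Hc H0 mpolyC0.
    rewrite big1 ?subr0; first exact: (phi_0 Hphi).
    by move=> j _; rewrite mderiv0 mulr0.
  case: Hphi => _ _ H3; have [G [HG HGI]] := H3 q.+1 g Hg Hgq.
  have EG : q.+1%:Z + l = (q + m)%N%:Z by move: Hm; lia.
  rewrite EG /= in HG.
  move=> c i; rewrite mevalB meval_sum.
  have e1 : (phi g).@[fun t => c * p i t] = G.@[fun t => c * p i t].
    by apply/eqP; rewrite -subr_eq0 -mevalB HGI.
  rewrite e1 (meval_homog _ _ HG).
  have e2 : G.@[p i] = E p phi i g by rewrite /E (inI_eq HGI i).
  rewrite e2 (HVl i _ _ Hg Hgq) mulr_sumr; apply/eqP; rewrite subr_eq0; apply/eqP.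
  apply: eq_bigr => j _.
  rewrite mevalM (meval_homog _ _ (HAm j)) (meval_homog _ _ (@mderiv_homog _ _ g q j Hgq)).
  by rewrite HAv exprD; ring.
move=> f Hf.
have Ef : f = \sum_(d < msize f) pihomog mdeg d f := pihomog_partitionE (leqnn _).
rewrite Ef; apply: (sum_case Hphi) => d.
  exact: inI_pihomog.
apply: (hc d); [exact: inI_pihomog | exact: pihomogP].
Qed.

End Main1.
Section Main2.
Variables (k : fieldType) (n r : nat) (p : 'I_r -> 'I_n -> k).
Hypothesis Hr : (0 < r)%N.
Hypothesis Hd : distinct_proj_points p.

Lemma n_pos : (0 < n)%N.
Proof.
case: Hd => H1 _; have [t _] := H1 (Ordinal Hr).
by case: n t => [[]|].
Qed.

Lemma bin_mono (d m : nat) : (d <= m)%N -> ('C(n + d - 1, d) <= 'C(n + m - 1, m))%N.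
Proof.
move=> Hdm; have := n_pos; case: n => [//|n'] _.
rewrite !addSn !subn1 /= -[X in 'C(_, X)](addKn n' d) -[X in (_ <= 'C(_, X))%N](addKn n' m).
rewrite bin_sub ?leq_addr // bin_sub ?leq_addr //; by apply: leq_bin2l; rewrite leq_add2l.
Qed.

Lemma Kpiece (Hgp : general_position p) (d : nat) :
  (r <= 'C(n + d - 1, d))%N -> forall m : nat, (d <= m)%N ->
  K_piece_eq_O_piece p m%:Z.
Proof.
move=> Hrd [|m] Hdm c.
  have Hd0 : d = 0%N by case: d Hdm Hrd.
  rewrite Hd0 bin0 in Hrd.
  exists (c (Ordinal Hr))%:MP; split.
    by rewrite /= -alg_mpolyC rpredZ // dhomog1.
  move=> i; rewrite mevalC; congr (c _); apply: val_inj => /=.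
  by case: i => [[|i] Hi] //=; move: Hi Hrd; lia.
have Hrk := Hgp m.+1 isT.
have Hmin : minn r 'C(n + m.+1 - 1, m.+1) = r.
  by apply/minn_idPl; apply: leq_trans Hrd (bin_mono Hdm).
rewrite Hmin in Hrk.
have Hfull : row_full (eval_mx p m.+1) by rewrite /row_full Hrk.
have /submxP [u Hu] := submx_full (\row_i c i) Hfull.
exists (\sum_a u 0 a *: (let mm := (enum_val a : 'X_{1..n < m.+2}) in
      if mdeg mm == m.+1 then ('X_[mm : 'X_{1..n}] : {mpoly k[n]}) else 0)).
split.
  apply: rpred_sum => a _; apply: rpredZ => /=.
  by case: ifP => H; [rewrite dhomogX | exact: rpred0].
move=> i; rewrite meval_sumT.
have := congr1 (fun M : 'rV_r => M 0 i) Hu; rewrite !mxE => ->.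
apply: eq_bigr => a _; rewrite mevalZ mxE /=; congr (_ * _).
by case: ifP => _ //; rewrite meval0.
Qed.

End Main2.

Unset Implicit Arguments.
Set Strict Implicit.

Theorem mainTheorem2 (k : closedFieldType) (n r : nat)
    (p : 'I_r -> 'I_n -> k) :
  [pchar k] =i pred0 ->
  (0 < r)%N ->
  distinct_proj_points p ->
  (forall l : int, K_piece_eq_O_piece p (l + 1) -> T1_vanishes p l) /\
  (general_position p ->
   forall d : nat,
     ((0 < d)%N -> ('C(n + d - 2, d - 1) < r)%N) ->
     (r <= 'C(n + d - 1, d))%N ->
     forall l : int, (d%:Z - 1 <= l) -> T1_vanishes p l).
Proof.
move=> Hchar Hr Hd; split; first exact: part1.
move=> Hgp d _ Hrd l Hl; apply: (part1 Hchar Hr Hd).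
have [m [Hm Hdm]] : exists m : nat, l + 1 = m%:Z /\ (d <= m)%N.
  by case El : (l + 1) => [m|m]; exists m; lia.
rewrite Hm; exact: (Kpiece Hr Hd Hgp Hrd Hdm).
Qed.
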